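(* Let $\mathbb{F}$ be a field, let $\mathcal{V} \subseteq \mathbb{F}^{m \times n}$ and $\mathcal{W} \subseteq \mathbb{F}^{m \times n'}$ be rank support spaces, and let $\phi : \mathcal{V} \to \mathcal{W}$ be an $\mathbb{F}$-linear vector space isomorphism. Consider the properties: (P1) there exist full-rank matrices $A \in \mathbb{F}^{m \times m}$ and $B \in \mathbb{F}^{n \times n'}$ such that $\phi(C) = ACB$ for all $C \in \mathcal{V}$; (P2) a subspace $\mathcal{U} \subseteq \mathcal{V}$ is a rank support space if and only if $\phi(\mathcal{U})$ is a rank support space; (P3) for every subspace $\mathcal{D} \subseteq \mathcal{V}$, ${\rm wt_R}(\phi(\mathcal{D})) = {\rm wt_R}(\mathcal{D})$; (P4) ${\rm Rk}(\phi(V)) = {\rm Rk}(V)$ for all $V \in \mathcal{V}$ (i.e. $\phi$ is a rank isometry). Then (P1) $\Leftrightarrow$ (P2) $\Leftrightarrow$ (P3) $\Rightarrow$ (P4). Moreover, in the case $\mathcal{V} = \mathcal{W} = \mathbb{F}^{m \times n}$ (so $n'=n$) and $m \neq n$, (P4) implies (P1) as well.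
   Context: For $C \in \mathbb{F}^{m\times n}$, ${\rm Row}(C) \subseteq \mathbb{F}^n$ is the row space and ${\rm Rk}(C) = \dim {\rm Row}(C)$. For a subspace $\mathcal{D} \subseteq \mathbb{F}^{m \times n}$, its rank support is ${\rm RSupp}(\mathcal{D}) = \sum_{C \in \mathcal{D}} {\rm Row}(C) \subseteq \mathbb{F}^n$ and its rank weight is ${\rm wt_R}(\mathcal{D}) = \dim {\rm RSupp}(\mathcal{D})$. For a subspace $\mathcal{L} \subseteq \mathbb{F}^n$, $\mathcal{V}_\mathcal{L} = \{V \in \mathbb{F}^{m\times n} \mid {\rm Row}(V) \subseteq \mathcal{L}\}$; a rank support space in $\mathbb{F}^{m \times n}$ is a set of the form $\mathcal{V}_\mathcal{L}$ for some subspace $\mathcal{L} \subseteq \mathbb{F}^n$ (analogously in $\mathbb{F}^{m\times n'}$). *)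

(* Defs.v *)
From HB Require Import structures.
From mathcomp Require Import all_boot all_order all_algebra.
Set Implicit Arguments. Unset Strict Implicit. Unset Printing Implicit Defensive.
Import GRing.Theory.
Local Open Scope ring_scope.

(* Subspaces of F^n are represented by square matrices L : 'M[F]_n (their row
   space); Row(C) is the row space of C, and (C <= L)%MS is Row(C) ⊆ Row(L). *)

Definition is_rank_support_space (F : fieldType) (m n : nat)
  (U : {vspace 'M[F]_(m, n)}) : Prop :=
  exists L : 'M[F]_n, forall X : 'M[F]_(m, n), (X \in U) = (X <= L)%MS.

(* RSupp(D) = sum over C in D of Row(C); since Row is additive/linear in C,
   this equals the sum over a basis of D. *)
Definition RSupp (F : fieldType) (m n : nat) (D : {vspace 'M[F]_(m, n)})
  : 'M[F]_n :=
  (\sum_(C <- vbasis D) <<C>>)%MS.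

Definition wtR (F : fieldType) (m n : nat) (D : {vspace 'M[F]_(m, n)}) : nat :=
  \rank (RSupp D).

Definition is_iso_on (F : fieldType) (m n n' : nat)
  (V : {vspace 'M[F]_(m, n)}) (W : {vspace 'M[F]_(m, n')})
  (f : 'Hom('M[F]_(m, n), 'M[F]_(m, n'))) : Prop :=
  (lker f :&: V = 0)%VS /\ (f @: V = W)%VS.

Definition P1 (F : fieldType) (m n n' : nat) (V : {vspace 'M[F]_(m, n)})
  (f : 'Hom('M[F]_(m, n), 'M[F]_(m, n'))) : Prop :=
  exists (A : 'M[F]_m) (B : 'M[F]_(n, n')),
    \rank A = m /\ \rank B = minn n n' /\
    forall C, C \in V -> f C = A *m C *m B.

Definition P2 (F : fieldType) (m n n' : nat) (V : {vspace 'M[F]_(m, n)})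
  (f : 'Hom('M[F]_(m, n), 'M[F]_(m, n'))) : Prop :=
  forall U : {vspace 'M[F]_(m, n)}, (U <= V)%VS ->
    (is_rank_support_space U <-> is_rank_support_space (f @: U)%VS).

Definition P3 (F : fieldType) (m n n' : nat) (V : {vspace 'M[F]_(m, n)})
  (f : 'Hom('M[F]_(m, n), 'M[F]_(m, n'))) : Prop :=
  forall D : {vspace 'M[F]_(m, n)}, (D <= V)%VS -> wtR (f @: D)%VS = wtR D.

Definition P4 (F : fieldType) (m n n' : nat) (V : {vspace 'M[F]_(m, n)})
  (f : 'Hom('M[F]_(m, n), 'M[F]_(m, n'))) : Prop :=
  forall C, C \in V -> \rank (f C) = \rank C.

(* Main.v *)
Require Import Defs.
From HB Require Import structures.
From mathcomp Require Import all_boot all_order all_algebra.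
From mathcomp Require Import zify.
Set Implicit Arguments. Unset Strict Implicit. Unset Printing Implicit Defensive.
Import GRing.Theory.
Local Open Scope ring_scope.

Section Basic.
Variable F : fieldType.

Lemma rowmul_rk1 m n (p : 'cV[F]_m) (x : 'rV[F]_n) i :
  row i (p *m x) = p i 0 *: x.
Proof. by apply/rowP=> j; rewrite /row !mxE big_ord1. Qed.

Lemma colmul_eq0 m n (p : 'cV[F]_m) (x : 'rV[F]_n) :
  x != 0 -> p *m x = 0 -> p = 0.
Proof.
move=> xn0 H; apply/colP=> i; rewrite mxE.
have := congr1 (row i) H; rewrite rowmul_rk1 row0 => /eqP.
by rewrite scaler_eq0 (negPf xn0) orbF => /eqP.
Qed.

Lemma free_of_inj k p (A : 'M[F]_(k, p)) :
  (forall u : 'rV_k, u *m A = 0 -> u = 0) -> row_free A.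
Proof.
move=> H; rewrite -kermx_eq0; apply/eqP/row_matrixP=> i; rewrite row0.
apply: H; by rewrite -row_mul mulmx_ker row0.
Qed.

Lemma unit_of_inj k (A : 'M[F]_k) :
  (forall c : 'cV_k, A *m c = 0 -> c = 0) -> A \in unitmx.
Proof.
move=> H; rewrite -unitmx_tr -row_free_unit; apply: free_of_inj => u Hu.
have : A *m u^T = 0 by rewrite -[A]trmxK -trmx_mul Hu trmx0.
by move/H/(congr1 trmx); rewrite trmxK trmx0.
Qed.

Lemma rk1_row k n (M : 'M[F]_(k, n)) : (\rank M <= 1)%N ->
  exists x : 'rV_n, (M <= x)%MS.
Proof.
move=> rk; case: (eqVneq M 0) => [->|Mn0]; first by exists 0; rewrite sub0mx.
have [i Hi] : exists i, row i M != 0.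
  apply/existsP; apply: contraR Mn0; rewrite negb_exists => /forallP H.
  by apply/eqP/row_matrixP=> i; rewrite row0; apply/eqP; have := H i; rewrite negbK.
exists (row i M).
have := mxrank_leqif_sup (row_sub i M) => /geq_leqif <-.
apply: leq_trans rk _; by rewrite lt0n mxrank_eq0.
Qed.

Lemma rk1_dec k n (M : 'M[F]_(k, n)) : (\rank M <= 1)%N ->
  exists (d : 'cV_k) (y : 'rV_n), M = d *m y.
Proof. by case/rk1_row=> y Hy; exists (M *m pinvmx y), y; rewrite mulmxKpV. Qed.

Lemma rank_rV n (x : 'rV[F]_n) : (\rank x <= 1)%N.
Proof. exact: rank_leq_row. Qed.

Lemma rk1_eq n (a b : 'rV[F]_n) : a != 0 -> (a <= b)%MS -> (b <= a)%MS.
Proof.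
move=> an0 ab; have := mxrank_leqif_sup ab => /geq_leqif <-.
apply: leq_trans (rank_rV b) _; by rewrite lt0n mxrank_eq0.
Qed.

Lemma rank2 n (a b : 'rV[F]_n) : a != 0 -> ~~ (b <= a)%MS -> \rank (col_mx a b) = 2.
Proof.
move=> an0 nba; apply/eqP; rewrite eqn_leq rank_leq_row /=.
rewrite -addsmxE.
have := mxrank_leqif_sup (addsmxSl a b) => /= [[H1 H2]].
have ra : \rank a = 1%N.
  by apply/eqP; rewrite eqn_leq rank_rV lt0n mxrank_eq0.
have : (\rank a < \rank (a + b))%N.
  rewrite ltn_neqAle H1 andbT H2; apply: contra nba => H.
  exact: submx_trans (addsmxSr a b) H.
by rewrite ra.
Qed.

Lemma two_rk1 m n (d1 d2 : 'cV[F]_m) (y1 y2 : 'rV[F]_n) :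
  (\rank (d1 *m y1 + d2 *m y2)%R <= 1)%N -> d1 != 0 -> y1 != 0 ->
  (y2 <= y1)%MS \/ (d2^T <= d1^T)%MS.
Proof.
move=> rk dn0 yn0; case Hy: (y2 <= y1)%MS; first by left.
case Hd: (d2^T <= d1^T)%MS; first by right.
exfalso; move: rk; rewrite -mul_row_col mxrankMfree; last first.
  by rewrite /row_free rank2 // Hy.
rewrite -mxrank_tr tr_row_mx rank2 //; first by rewrite trmx_eq0.
by rewrite Hd.
Qed.

End Basic.

Section Supp.
Variables (F : fieldType) (m n : nat).
Implicit Types (D U : {vspace 'M[F]_(m, n)}).

Lemma RSuppE D : RSupp D = (\sum_(i < \dim D) <<tnth (vbasis D) i>>)%MS.
Proof. by rewrite /RSupp big_tuple. Qed.

Lemma RSupp_ub D X : X \in D -> (X <= RSupp D)%MS.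
Proof.
move=> XD; rewrite (coord_vbasis XD) RSuppE; apply: summx_sub => i _.
apply: scalemx_sub; apply: (sumsmx_sup i) => //.
by rewrite genmxE (tnth_nth 0).
Qed.

Lemma RSupp_minM p k D (B : 'M[F]_(n, p)) (N : 'M[F]_(k, p)) :
  (forall X, X \in D -> (X *m B <= N)%MS) -> (RSupp D *m B <= N)%MS.
Proof.
move=> H; rewrite RSuppE.
elim/big_ind: _ => [|A1 A2 h1 h2|i _].
- by rewrite mul0mx sub0mx.
- by rewrite (addsmxMr A1 A2 B) addsmx_sub h1 h2.
- rewrite (eqmxMr B (genmxE _)); apply: H.
  by apply: vbasis_mem; apply: mem_tnth.
Qed.

Lemma RSupp_min k D (N : 'M[F]_(k, n)) :
  (forall X, X \in D -> (X <= N)%MS) -> (RSupp D <= N)%MS.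
Proof.
move=> H; rewrite -[RSupp D]mulmx1; apply: RSupp_minM => X XD.
by rewrite mulmx1 H.
Qed.

Definition VMh k (M : 'M[F]_(k, n)) : 'Hom('M[F]_(m, \rank M), 'M[F]_(m, n)) :=
  linfun (mulmxr (row_base M)).
Definition VM k (M : 'M[F]_(k, n)) := limg (VMh M).

Lemma memVM k (M : 'M[F]_(k, n)) X : (X \in VM M) = (X <= M)%MS.
Proof.
apply/memv_imgP/idP => [[K _ ->]|XM].
  by rewrite lfunE /= -(eq_row_base M) submxMl.
exists (X *m pinvmx (row_base M)); first exact: memvf.
by rewrite lfunE /= mulmxKpV // eq_row_base.
Qed.

Lemma dimVM k (M : 'M[F]_(k, n)) : \dim (VM M) = (m * \rank M)%N.
Proof.
rewrite /VM limg_dim_eq ?dimvf ?dim_matrix //.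
have /eqP -> : lker (VMh M) == 0%VS.
  apply/lker0P => K1 K2; rewrite !lfunE /= => /eqP.
  rewrite -subr_eq0 -mulmxBl mulmx_free_eq0 ?row_base_free // subr_eq0.
  by move/eqP.
by rewrite capv0.
Qed.

Lemma VM_rss k (M : 'M[F]_(k, n)) : is_rank_support_space (VM M).
Proof. by exists <<M>>%MS => X; rewrite memVM genmxE. Qed.

Lemma rss_VM U : is_rank_support_space U -> exists L : 'M[F]_n, U = VM L.
Proof. by case=> L HL; exists L; apply/vspaceP=> X; rewrite HL memVM. Qed.

Lemma wtR_VM k (M : 'M[F]_(k, n)) : (0 < m)%N -> wtR (VM M) = \rank M.
Proof.
move=> m0; apply/eqmx_rank/andP; split.
  by apply: RSupp_min => X; rewrite memVM.
apply/row_subP=> j.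
set i0 : 'I_m := Ordinal m0.
have H : (delta_mx i0 0 *m row j M <= RSupp (VM M))%MS.
  by apply: RSupp_ub; rewrite memVM; apply: submx_trans (submxMl _ _) (row_sub _ _).
have E : row i0 (delta_mx i0 0 *m row j M) = row j M.
  by rewrite rowmul_rk1 mxE !eqxx scale1r.
by rewrite -E; apply: submx_trans (row_sub i0 _) H.
Qed.

Lemma wtR_line (C : 'M[F]_(m, n)) : wtR <[C]>%VS = \rank C.
Proof.
apply/eqmx_rank/andP; split.
  by apply: RSupp_min => X /vlineP [k ->]; apply: scalemx_sub.
exact/RSupp_ub/memv_line.
Qed.

Lemma rss_dim U : (0 < m)%N ->
  is_rank_support_space U <-> \dim U = (m * wtR U)%N.
Proof.
move=> m0; split.
  by case/rss_VM=> L ->; rewrite dimVM wtR_VM.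
move=> dU.
have sub : (U <= VM (RSupp U))%VS.
  by apply/subvP=> X XU; rewrite memVM RSupp_ub.
have := dimv_leqif_eq sub; rewrite dimVM -/(wtR U) -dU => /geq_leqif.
rewrite leqnn => /esym/eqP ->; exact: VM_rss.
Qed.

End Supp.

Lemma submxB (F : fieldType) k1 k3 n (A : 'M[F]_(k1, n)) (B : 'M[F]_(k1, n))
  (C : 'M[F]_(k3, n)) : (A <= C)%MS -> (B <= C)%MS -> (A - B <= C)%MS.
Proof. by move=> hA hB; rewrite addmx_sub // (eqmx_opp B). Qed.

Lemma mulmx_colrow (R : pzRingType) k r p (K : 'M[R]_(k, r)) (M : 'M[R]_(r, p)) :
  K *m M = \sum_i col i K *m row i M.
Proof.
apply/matrixP=> a b; rewrite !mxE summxE; apply: eq_bigr => i _.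
by rewrite !mxE big_ord1 /col /row !mxE.
Qed.

Section Core.
Variables (F : fieldType) (m n n' : nat).
Variable f : 'Hom('M[F]_(m, n), 'M[F]_(m, n')).
Variable L : 'M[F]_n.
Hypothesis m0 : (0 < m)%N.
Hypothesis finj : forall C, (C <= L)%MS -> f C = 0 -> C = 0.
Hypothesis R1 : forall x : 'rV[F]_n, (x <= L)%MS ->
  exists x' : 'rV[F]_n', forall c : 'cV[F]_m, (f (c *m x) <= x')%MS.

Let i0 : 'I_m := Ordinal m0.
Let e0 : 'cV[F]_m := delta_mx i0 0.

Lemma e0_neq0 : e0 != 0.
Proof.
apply/eqP=> /matrixP /(_ i0 0); rewrite /e0 !mxE !eqxx /=.
by move/eqP; rewrite oner_eq0.
Qed.

Lemma row_e0 p (b : 'rV[F]_p) : row i0 (e0 *m b) = b.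
Proof. by rewrite rowmul_rk1 /e0 mxE !eqxx scale1r. Qed.

Section Pair.
Variable A : 'M[F]_m.
Hypothesis Aunit : A \in unitmx.

Lemma pair_lemma (x y : 'rV[F]_n) (y' : 'rV[F]_n') :
  (x <= L)%MS -> (y <= L)%MS ->
  (forall p q : 'cV[F]_m, p *m x + q *m y = 0 -> p = 0 /\ q = 0) ->
  (forall c, f (c *m y) = A *m c *m y') ->
  exists b : 'rV[F]_n', forall c, f (c *m x) = A *m c *m b.
Proof.
move=> Lx Ly ind Ey.
have [x' Hx'] := R1 Lx.
have Lxy : ((x + y)%R <= L)%MS by rewrite addmx_sub.
have [z' Hz'] := R1 Lxy.
have [u Ex] : exists u : 'cV_m -> 'cV_m, forall c, f (c *m x) = A *m u c *m x'.
  exists (fun c => invmx A *m (f (c *m x) *m pinvmx x')).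
  by move=> c; rewrite mulKVmx // mulmxKpV.
have [w Ez] : exists w : 'cV_m -> 'cV_m, forall c, f (c *m (x + y)) = A *m w c *m z'.
  exists (fun c => invmx A *m (f (c *m (x + y)) *m pinvmx z')).
  by move=> c; rewrite mulKVmx // mulmxKpV.
have E : forall c, w c *m z' = u c *m x' + c *m y'.
  move=> c; apply: (can_inj (mulKmx Aunit)).
  rewrite mulmxDr !mulmxA -Ez -Ex -Ey -linearD /=.
  by rewrite mulmxDr.
have indx : forall a b : F, a *: x' + b *: y' = 0 -> a = 0 /\ b = 0.
  move=> a b H.
  have ey0 : f (e0 *m y) != 0.
    apply: contra e0_neq0 => /eqP /finj H1.
    have /H1 H2 : (e0 *m y <= L)%MS by apply: submx_trans (submxMl _ _) Ly.
    by have := ind 0 e0; rewrite mul0mx add0r H2 => /(_ erefl) [_ ->].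
  case: (eqVneq a 0) => [a0|an0].
    move: H; rewrite a0 scale0r add0r => /eqP; rewrite scaler_eq0.
    case/orP=> [/eqP //|/eqP y0]; exfalso.
    by move: ey0; rewrite Ey y0 mulmx0 eqxx.
  exfalso.
  have ex : x' = (- (b / a)) *: y'.
    apply: (can_inj (scalerK an0)); rewrite scalerA mulrN mulrCA divff //.
    by rewrite mulr1 scaleNr; apply/eqP; rewrite -subr_eq0 opprK H.
  set d := (- (b / a)) *: u e0.
  have H0 : f (e0 *m x - d *m y) = 0.
    rewrite linearB /= Ex Ey ex -!mulmxA -scalemxAr scalemxAl.
    by rewrite /d subrr.
  have L0 : (e0 *m x - d *m y <= L)%MS.
    by apply: submxB; apply: submx_trans (submxMl _ _) _.
  have := finj L0 H0; rewrite -mulNmx => /ind [e00 _].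
  by move: e0_neq0; rewrite e00 eqxx.
have indc : forall p q : 'cV[F]_m, p *m x' + q *m y' = 0 -> p = 0 /\ q = 0.
  move=> p q H.
  have Hi : forall i, p i 0 = 0 /\ q i 0 = 0.
    move=> i; apply: indx; have := congr1 (row i) H.
    by rewrite linearD /= !rowmul_rk1 row0.
  by split; apply/colP=> i; rewrite mxE; case: (Hi i).
have we0 : w e0 != 0.
  apply/eqP=> H; have := E e0; rewrite H mul0mx => /esym /indc [_].
  by move/eqP; rewrite (negPf e0_neq0).
have [i wi] : exists i, w e0 i 0 != 0.
  apply/existsP; apply: contraR we0; rewrite negb_exists => /forallP Hi.
  by apply/eqP/colP=> i; rewrite mxE; apply/eqP; have := Hi i; rewrite negbK.
pose al := u e0 i 0 / w e0 i 0.
pose be := e0 i 0 / w e0 i 0.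
have ez : z' = al *: x' + be *: y'.
  have := congr1 (row i) (E e0); rewrite linearD /= !rowmul_rk1 => H.
  apply: (can_inj (scalerK wi)); rewrite H scalerDr !scalerA.
  by rewrite /al /be !mulrA !(mulrC (w e0 i 0)) -!mulrA divff // !mulr1.
have Ec : forall c, u c = al *: w c /\ c = be *: w c.
  move=> c.
  have : (al *: w c - u c) *m x' + (be *: w c - c) *m y' = 0.
    rewrite !mulmxBl addrACA -opprD -E ez mulmxDr -!scalemxAl -(scalemxAr al) -(scalemxAr be).
    by rewrite !scalemxAl subrr.
  case/indc => /eqP H1 /eqP H2; move: H1 H2; rewrite !subr_eq0 => /eqP H1 /eqP H2.
  by split.
have be0 : be != 0.
  apply: contra e0_neq0 => /eqP b0; have [_ ->] := Ec e0.
  by rewrite b0 scale0r.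
exists ((al / be) *: x') => c.
rewrite Ex; have [-> Hc] := Ec c.
have -> : al *: w c = (al / be) *: c by rewrite {2}Hc scalerA divfK.
by rewrite -!scalemxAr -scalemxAl.
Qed.

End Pair.

Lemma core_lemma : exists (A : 'M[F]_m) (B : 'M[F]_(n, n')),
  A \in unitmx /\ forall C, (C <= L)%MS -> f C = A *m C *m B.
Proof.
case: (posnP (\rank L)) => [/eqP|r0].
  rewrite mxrank_eq0 => /eqP L0; exists 1%:M, 0; split; first exact: unitmx1.
  move=> C; rewrite L0 submx0 => /eqP ->; by rewrite linear0 mulmx0.
set r := \rank L in r0 *.
set Bs := row_base L.
have Bsfree : row_free Bs by exact: row_base_free.
have rowL : forall i, (row i Bs <= L)%MS.
  by move=> i; rewrite -(eq_row_base L); exact: row_sub.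
have rown0 : forall i, row i Bs != 0.
  move=> i; apply/eqP; rewrite rowE => /eqP; rewrite mulmx_free_eq0 //.
  move=> /eqP/matrixP/(_ 0 i); rewrite !mxE !eqxx /= => /eqP.
  by rewrite oner_eq0.
pose j0 : 'I_r := Ordinal r0.
set x1 := row j0 Bs.
have [x1' Hx1'] := R1 (rowL j0).
pose gl : 'Hom('cV[F]_m, 'cV[F]_m) :=
  (linfun (mulmxr (pinvmx x1')) \o f \o linfun (mulmxr x1))%VF.
have glE : forall c, gl c = f (c *m x1) *m pinvmx x1'.
  by move=> c; rewrite !comp_lfunE !lfunE.
pose A := \matrix_(i, j) gl (delta_mx j 0) i 0.
have AE : forall c, A *m c = gl c.
  move=> c; apply/colP=> i.
  have -> : gl c = \sum_j c j 0 *: gl (delta_mx j 0).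
    rewrite (eq_bigr (fun j => gl (c j 0 *: delta_mx j 0))); last first.
      by move=> j _; rewrite linearZ.
    rewrite -linear_sum /=; congr (gl _).
    rewrite {1}[c]matrix_sum_delta; apply: eq_bigr => j _.
    by rewrite big_ord1.
  rewrite !mxE summxE; apply: eq_bigr => j _; rewrite !mxE mulrC.
  by [].
have Ex1 : forall c, f (c *m x1) = A *m c *m x1'.
  by move=> c; rewrite AE glE mulmxKpV.
have Aunit : A \in unitmx.
  apply: unit_of_inj => c Ac.
  have : f (c *m x1) = 0 by rewrite Ex1 Ac mul0mx.
  move/finj; rewrite (submx_trans (submxMl _ _) (rowL j0)) => /(_ isT).
  exact: colmul_eq0 (rown0 j0).
pose b i := row i0 (invmx A *m f (e0 *m row i Bs)).
have Hb : forall i c, f (c *m row i Bs) = A *m c *m b i.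
  move=> i.
  have [b' Hb'] : exists b' : 'rV[F]_n', forall c, f (c *m row i Bs) = A *m c *m b'.
    case: (eqVneq i j0) => [->|ij]; first by exists x1'.
    apply: (pair_lemma Aunit (rowL i) (rowL j0) _ Ex1) => p q.
    rewrite /x1 !rowE (mulmxA p) (mulmxA q) -mulmxDl => /eqP; rewrite mulmx_free_eq0 // => /eqP/matrixP H.
    have H1 : forall k, p k 0 + q k 0 * (j0 == i)%:R = 0.
      move=> k; have := H k i; rewrite !mxE !big_ord1 !mxE !eqxx /=.
      by rewrite mulr1 eq_sym.
    have H2 : forall k, p k 0 * (i == j0)%:R + q k 0 = 0.
      move=> k; have := H k j0; rewrite !mxE !big_ord1 !mxE !eqxx /=.
      by rewrite mulr1 eq_sym.
    split; apply/colP=> k; rewrite mxE.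
      by have := H1 k; rewrite eq_sym (negPf ij) mulr0 addr0.
    by have := H2 k; rewrite (negPf ij) mulr0 add0r.
  suff -> : b i = b' by [].
  by rewrite /b Hb' -mulmxA mulKmx // row_e0.
pose B' := \matrix_i b i.
exists A, (pinvmx Bs *m B'); split => // C CL.
have CB : (C <= Bs)%MS by rewrite eq_row_base.
set K := C *m pinvmx Bs.
have CK : C = K *m Bs by rewrite mulmxKpV.
rewrite {1}CK mulmx_colrow linear_sum /=.
under eq_bigr do rewrite Hb.
rewrite CK -(mulmxA A) -(mulmxA K) (mulmxA Bs) mulmxVp // mul1mx.
rewrite (mulmx_colrow K B') mulmx_sumr; apply: eq_bigr => i _.
by rewrite rowK mulmxA.
Qed.


End Core.

Section Ext.
Variable F : fieldType.

Lemma G_lemma p1 p2 n n' (P : 'M[F]_(p1, n)) (Q : 'M[F]_(p2, n')) :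
  exists G : 'M[F]_(n, n'),
    (P *m G <= Q)%MS /\ \rank (P *m G) = minn (\rank P) (\rank Q).
Proof.
set s := minn (\rank P) (\rank Q).
have sP : (s <= \rank P)%N by rewrite geq_minl.
have sQ : (s <= \rank Q)%N by rewrite geq_minr.
have Pn : (\rank P <= n)%N := rank_leq_col P.
have Pp : (\rank P <= p1)%N := rank_leq_row P.
have Qn : (\rank Q <= n')%N := rank_leq_col Q.
exists (invmx (row_ebase P) *m pid_mx s *m row_ebase Q).
have PG : P *m (invmx (row_ebase P) *m pid_mx s *m row_ebase Q)
        = col_ebase P *m pid_mx s *m row_ebase Q.
  rewrite -{1}(mulmx_ebase P) !mulmxA mulmxK ?row_ebase_unit //.
  rewrite -(mulmxA _ (pid_mx (\rank P))) mul_pid_mx.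
  have -> : minn n (minn (\rank P) s) = s by lia.
  by [].
rewrite PG; split.
  rewrite -mulmxA; apply: submx_trans (submxMl _ _) _.
  rewrite -(eq_row_base Q) /row_base /=.
  have -> : (pid_mx s : 'M[F]_(p1, n')) =
            (pid_mx s : 'M[F]_(p1, \rank Q)) *m pid_mx (\rank Q).
    rewrite mul_pid_mx; congr pid_mx; lia.
  by rewrite -mulmxA submxMl.
rewrite mxrankMfree; last by rewrite row_free_unit row_ebase_unit.
rewrite eqmxMfull; last by rewrite row_full_unit col_ebase_unit.
rewrite rank_pid_mx //; lia.
Qed.

Lemma ext_lemma n n' (L : 'M[F]_n) (B : 'M[F]_(n, n')) :
  (L :&: kermx B)%MS = 0 ->
  exists B2 : 'M[F]_(n, n'), \rank B2 = minn n n' /\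
    forall k (X : 'M[F]_(k, n)), (X <= L)%MS -> X *m B2 = X *m B.
Proof.
move=> inj.
set Lc := (L^C)%MS.
have dLc : (L :&: Lc = 0)%MS := capmx_compl L.
have dcL : (Lc :&: L = 0)%MS by rewrite capmxC.
set PL := proj_mx L Lc; set PC := proj_mx Lc L.
set K := L *m B.
have [G [HG1 HG2]] := G_lemma PC (K^C)%MS.
exists (PL *m B + PC *m G); split; last first.
  move=> k X XL; rewrite mulmxDr (mulmxA X PL) (mulmxA X PC) /PL /PC (proj_mx_id dLc XL).
  by rewrite (proj_mx_0 dcL XL) mul0mx addr0.
have PLL : (PL <= L)%MS by rewrite -[PL]mul1mx proj_mx_sub.
have PCL : (PC <= Lc)%MS by rewrite -[PC]mul1mx proj_mx_sub.
have rK : \rank K = \rank L.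
  by have := mxrank_mul_ker L B; rewrite inj mxrank0 addn0.
have rPLB : \rank (PL *m B) = \rank L.
  rewrite -rK; apply/eqmx_rank/andP; split; first exact: submxMr.
  by rewrite /K -{1}(proj_mx_id dLc (submx_refl L)) -mulmxA submxMl.
have rPC : \rank PC = (n - \rank L)%N.
  rewrite -mxrank_compl -/Lc; apply/eqmx_rank/andP; split => //.
  by rewrite -{1}(proj_mx_id dcL (submx_refl Lc)) submxMl.
have rKc : \rank (K^C)%MS = (n' - \rank L)%N by rewrite mxrank_compl rK.
have E1 : PL *m (PL *m B + PC *m G) = PL *m B.
  rewrite mulmxDr (mulmxA PL PL) (mulmxA PL PC) proj_mx_proj // (proj_mx_0 dcL PLL) mul0mx addr0.
  by [].
have E2 : PC *m (PL *m B + PC *m G) = PC *m G.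
  rewrite mulmxDr (mulmxA PC PL) (mulmxA PC PC) proj_mx_proj // (proj_mx_0 dLc PCL) mul0mx add0r.
  by [].
have sub : (PL *m B + PC *m G <= (PL *m B + PC *m G)%R)%MS.
  rewrite addsmx_sub; apply/andP; split; [rewrite -{1}E1 | rewrite -{1}E2]; exact: submxMl.
have disj : (PL *m B :&: PC *m G)%MS = 0.
  apply/eqP; rewrite -submx0 -(capmx_compl K) capmxS //.
  exact: submxMr.
have := mxrankS sub; rewrite mxrank_disjoint_sum // rPLB HG2 rPC rKc.
have Ln : (\rank L <= n)%N := rank_leq_row L.
have Ln' : (\rank L <= n')%N by rewrite -rK rank_leq_col.
move=> H; apply/eqP; rewrite eqn_leq leq_min rank_leq_row rank_leq_col /=.
apply: leq_trans H; lia.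
Qed.

End Ext.

Section RankOne.
Variables (F : fieldType) (m n : nat).
Variable f : 'Hom('M[F]_(m, n), 'M[F]_(m, n)).
Hypothesis nm : (n < m)%N.
Hypothesis finj : forall C, f C = 0 -> C = 0.
Hypothesis frank : forall C, \rank (f C) = \rank C.

Lemma R1_rank (x : 'rV[F]_n) :
  exists x' : 'rV[F]_n, forall c : 'cV[F]_m, (f (c *m x) <= x')%MS.
Proof.
case: (eqVneq x 0) => [->|xn0].
  by exists 0 => c; rewrite mulmx0 linear0 sub0mx.
have m0 : (0 < m)%N by lia.
pose i0 : 'I_m := Ordinal m0.
pose e0 : 'cV[F]_m := delta_mx i0 0.
have e0n0 : e0 != 0.
  apply/eqP=> /matrixP /(_ i0 0); rewrite /e0 !mxE !eqxx /=.
  by move/eqP; rewrite oner_eq0.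
have rkQ : forall c, (\rank (f (c *m x)) <= 1)%N.
  by move=> c; rewrite frank; apply: leq_trans (mxrankM_maxr _ _) (rank_rV _).
have Qinj : forall c, f (c *m x) = 0 -> c = 0.
  by move=> c /finj; apply: colmul_eq0.
have Qsum : forall c c', f ((c + c') *m x) = f (c *m x) + f (c' *m x).
  by move=> c c'; rewrite mulmxDl linearD.
have [d1 [y1 E1]] := rk1_dec (rkQ e0).
have Q0 : f (e0 *m x) != 0 by apply: contra e0n0 => /eqP/Qinj ->.
have d1n0 : d1 != 0 by apply: contra Q0 => /eqP d0; rewrite E1 d0 mul0mx.
have y1n0 : y1 != 0 by apply: contra Q0 => /eqP y0; rewrite E1 y0 mulmx0.
exists y1 => c; apply/negPn/negP => Hc.
have [d2 [y2 E2]] := rk1_dec (rkQ c).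
have ny21 : ~~ (y2 <= y1)%MS.
  apply: contra Hc => H; rewrite E2; exact: submx_trans (submxMl _ _) H.
have d2n0 : d2 != 0.
  by apply: contra Hc => /eqP d0; rewrite E2 d0 mul0mx sub0mx.
have y2n0 : y2 != 0.
  by apply: contra Hc => /eqP y0; rewrite E2 y0 mulmx0 sub0mx.
have d21 : (d2^T <= d1^T)%MS.
  have := rkQ (e0 + c); rewrite Qsum E1 E2 => /two_rk1 /(_ d1n0 y1n0).
  by case=> // H; move: ny21; rewrite H.
have allc : forall c', ((f (c' *m x))^T <= d1^T)%MS.
  move=> c'; have [d [y E]] := rk1_dec (rkQ c').
  rewrite E trmx_mul.
  case Hd: (d^T <= d1^T)%MS; first exact: submx_trans (submxMl _ _) Hd.
  case: (eqVneq y 0) => [->|yn0]; first by rewrite trmx0 mul0mx sub0mx.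
  have y1y : (y <= y1)%MS.
    have := rkQ (e0 + c'); rewrite Qsum E1 E => /two_rk1 /(_ d1n0 y1n0).
    by case=> // H; move: Hd; rewrite H.
  have y2y : (y <= y2)%MS.
    have := rkQ (c + c'); rewrite Qsum E2 E => /two_rk1 /(_ d2n0 y2n0).
    case=> // H; move: Hd; by rewrite (submx_trans H d21).
  have := rk1_eq yn0 y2y => H2.
  by move: ny21; rewrite (submx_trans H2 y1y).
pose zH : 'Hom('cV[F]_m, 'rV[F]_n) :=
  (linfun trmx \o linfun (mulmxr (pinvmx d1^T)) \o linfun trmx \o f
     \o linfun (mulmxr x))%VF.
have zE : forall c', zH c' = ((f (c' *m x))^T *m pinvmx d1^T)^T.
  by move=> c'; rewrite !comp_lfunE !lfunE.
have zinj : lker zH == 0%VS.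
  apply/lker0P => c1 c2 H; apply/eqP; rewrite -subr_eq0; apply/eqP.
  apply: Qinj; rewrite mulmxBl linearB /=; apply/eqP; rewrite subr_eq0; apply/eqP.
  apply: trmx_inj; rewrite -(mulmxKpV (allc c1)) -(mulmxKpV (allc c2)).
  by move: H; rewrite !zE => /trmx_inj ->.
have := limg_dim_eq (f := zH) (U := fullv).
rewrite (eqP zinj) capv0 => /(_ erefl).
rewrite dimvf dim_matrix => H.
have := dimvS (subvf (zH @: fullv)%VS); rewrite H dimvf dim_matrix.
lia.
Qed.

End RankOne.

Section MainPos.
Variables (F : fieldType) (m n n' : nat).
Hypothesis m0 : (0 < m)%N.
Variable V : {vspace 'M[F]_(m, n)}.
Variable L : 'M[F]_n.
Hypothesis hL : forall X, (X \in V) = (X <= L)%MS.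
Variable f : 'Hom('M[F]_(m, n), 'M[F]_(m, n')).
Hypothesis hker : (lker f :&: V = 0)%VS.

Let i0 : 'I_m := Ordinal m0.
Let e0 : 'cV[F]_m := delta_mx i0 0.

Lemma row_e0' p (b : 'rV[F]_p) : row i0 (e0 *m b) = b.
Proof. by rewrite rowmul_rk1 /e0 mxE !eqxx scale1r. Qed.

Lemma finjV C : C \in V -> f C = 0 -> C = 0.
Proof.
move=> CV fC; apply/eqP; rewrite -memv0 -hker memv_cap CV andbT memv_ker fC.
by [].
Qed.

Lemma capU (U : {vspace 'M[F]_(m, n)}) : (U <= V)%VS -> (U :&: lker f = 0)%VS.
Proof.
move=> UV; apply/eqP; rewrite -subv0 -hker capvC.
by apply: capvS.
Qed.

Lemma kerB (A : 'M[F]_m) (B : 'M[F]_(n, n')) :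
  (forall C, C \in V -> f C = A *m C *m B) -> (L :&: kermx B)%MS = 0.
Proof.
move=> Hf; apply/row_matrixP => i; rewrite row0.
set r := row i _.
have rL : (r <= L)%MS by apply: submx_trans (row_sub _ _) (capmxSl _ _).
have rB : r *m B = 0.
  by apply/eqP; rewrite -sub_kermx; apply: submx_trans (row_sub _ _) (capmxSr _ _).
have CV : e0 *m r \in V by rewrite hL; apply: submx_trans (submxMl _ _) rL.
have := finjV CV; rewrite Hf // -!mulmxA rB !mulmx0 => /(_ erefl) H.
by rewrite -(row_e0' r) H row0.
Qed.

Lemma P1_P3 : P1 V f -> P3 V f.
Proof.
case=> A [B [rA [_ Hf]]] D DV.
have Aunit : A \in unitmx by rewrite -row_free_unit /row_free rA.
have kB := kerB Hf.
set S := RSupp D.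
have SL : (S <= L)%MS.
  by apply: RSupp_min => X XD; rewrite -hL; apply: (subvP DV).
have rS : \rank (S *m B) = \rank S.
  have := mxrank_mul_ker S B.
  have -> : (S :&: kermx B)%MS = 0.
    by apply/eqP; rewrite -submx0 -kB capmxS.
  by rewrite mxrank0 addn0.
rewrite /wtR -/S -rS; apply/eqmx_rank/andP; split.
  apply: RSupp_min => Y /memv_imgP [X XD ->].
  rewrite Hf; last exact: (subvP DV).
  rewrite -mulmxA; apply: submx_trans (submxMl _ _) _.
  by apply: submxMr; apply: RSupp_ub.
apply: RSupp_minM => X XD.
have -> : X *m B = invmx A *m f X.
  by rewrite Hf ?(subvP DV) // -mulmxA mulKmx.
apply: submx_trans (submxMl _ _) _.
by apply: RSupp_ub; apply: memv_img.
Qed.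

Lemma P3_P4 : P3 V f -> P4 V f.
Proof.
move=> H3 C CV.
have sub : (<[C]> <= V)%VS by rewrite -memvE.
by have := H3 _ sub; rewrite limg_line !wtR_line.
Qed.

Lemma P3_P2 : P3 V f -> P2 V f.
Proof.
move=> H3 U UV.
rewrite (rss_dim U m0) (rss_dim (f @: U)%VS m0) limg_dim_eq ?capU //.
by rewrite H3.
Qed.

Lemma P2_P1 : P2 V f -> P1 V f.
Proof.
move=> H2.
have R1 : forall x : 'rV[F]_n, (x <= L)%MS ->
    exists x' : 'rV[F]_n', forall c : 'cV[F]_m, (f (c *m x) <= x')%MS.
  move=> x xL.
  set U := VM m x.
  have UV : (U <= V)%VS.
    by apply/subvP => X; rewrite memVM hL => H; apply: submx_trans H xL.
  have [M EM] : exists M : 'M[F]_n', (f @: U)%VS = VM m M.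
    by apply: rss_VM; apply/(H2 U UV); apply: VM_rss.
  have rM : (\rank M <= 1)%N.
    have := dimVM m M; rewrite -EM limg_dim_eq ?capU // dimVM => E.
    by rewrite -(leq_pmul2l m0) -E leq_pmul2l ?rank_rV.
  have [x' Mx'] := rk1_row rM.
  exists x' => c; apply: submx_trans Mx'.
  by rewrite -memVM -EM; apply: memv_img; rewrite memVM submxMl.
have finj' : forall C, (C <= L)%MS -> f C = 0 -> C = 0.
  by move=> C; rewrite -hL; apply: finjV.
have [A [B [Aunit Hf]]] := core_lemma m0 finj' R1.
have Hf' : forall C, C \in V -> f C = A *m C *m B by move=> C; rewrite hL; apply: Hf.
have [B2 [rB2 HB2]] := ext_lemma (kerB Hf').
exists A, B2; split; first exact: mxrank_unit.
split => // C CV; rewrite Hf' // -mulmxA -(HB2 _ C) ?mulmxA // -hL.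
exact: CV.
Qed.

End MainPos.

Section Zero.
Variables (F : fieldType) (n n' : nat).

Lemma rss0 k (U : {vspace 'M[F]_(0, k)}) : is_rank_support_space U.
Proof. by exists 0 => X; rewrite [X]flatmx0 mem0v sub0mx. Qed.

Lemma wtR0 k (D : {vspace 'M[F]_(0, k)}) : wtR D = 0%N.
Proof.
apply/eqP; rewrite mxrank_eq0 -submx0; apply: RSupp_min => X _.
by rewrite [X]flatmx0 sub0mx.
Qed.

Lemma all0 (V : {vspace 'M[F]_(0, n)}) (f : 'Hom('M[F]_(0, n), 'M[F]_(0, n'))) :
  [/\ P1 V f, P2 V f, P3 V f & P4 V f].
Proof.
split.
- exists 1%:M, (pid_mx (minn n n')); split; first by rewrite mxrank1.
  split; first by rewrite rank_pid_mx // ?geq_minl ?geq_minr.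
  by move=> C _; rewrite [LHS]flatmx0 [RHS]flatmx0.
- by move=> U _; split => _; apply: rss0.
- by move=> D _; rewrite !wtR0.
- by move=> C _; rewrite [f C]flatmx0 [C]flatmx0 !mxrank0.
Qed.

End Zero.

Section Square.
Variable F : fieldType.

Lemma sq_gt m n (f : 'Hom('M[F]_(m, n), 'M[F]_(m, n))) : (n < m)%N ->
  (lker f :&: fullv = 0)%VS -> P4 fullv f -> P1 fullv f.
Proof.
move=> nm hk H4.
have m0 : (0 < m)%N by lia.
have finj : forall C, f C = 0 -> C = 0.
  move=> C fC; apply/eqP; rewrite -memv0 -hk memv_cap memvf andbT memv_ker fC.
  by [].
have frank : forall C, \rank (f C) = \rank C by move=> C; apply: H4; apply: memvf.
have [A [B [Aunit Hf]]] := @core_lemma F m n n f 1%:M m0 (fun C _ => finj C)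
  (fun x _ => R1_rank nm finj frank x).
have hL : forall X, (X \in (fullv : {vspace 'M[F]_(m, n)})) = (X <= 1%:M)%MS.
  by move=> X; rewrite memvf submx1.
have hker : (lker f :&: fullv = 0)%VS by [].
have Hf' : forall C, C \in fullv -> f C = A *m C *m B.
  by move=> C _; apply: Hf; apply: submx1.
have := kerB m0 hL hker Hf'; rewrite cap1mx => /eqP; rewrite kermx_eq0 => Bfree.
exists A, B; split; first exact: mxrank_unit.
split; first by rewrite minnn; apply/eqP.
by [].
Qed.

Lemma sq_lt m n (f : 'Hom('M[F]_(m, n), 'M[F]_(m, n))) : (m < n)%N ->
  (lker f :&: fullv = 0)%VS -> P4 fullv f -> P1 fullv f.
Proof.
move=> mn hk H4.
pose g : 'Hom('M[F]_(n, m), 'M[F]_(n, m)) := (linfun trmx \o f \o linfun trmx)%VF.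
have gE : forall Y, g Y = (f Y^T)^T by move=> Y; rewrite !comp_lfunE !lfunE.
have finj : forall C, f C = 0 -> C = 0.
  move=> C fC; apply/eqP; rewrite -memv0 -hk memv_cap memvf andbT memv_ker fC.
  by [].
have gk : (lker g :&: fullv = 0)%VS.
  rewrite capvf; apply/eqP/lker0P => Y1 Y2; rewrite !gE => /trmx_inj H.
  apply: trmx_inj; apply/eqP; rewrite -subr_eq0; apply/eqP; apply: finj.
  by rewrite linearB /= H subrr.
have g4 : P4 fullv g.
  by move=> Y _; rewrite gE mxrank_tr H4 ?memvf // mxrank_tr.
have [A [B [rA [rB Hg]]]] := sq_gt mn gk g4.
exists B^T, A^T; split; first by rewrite mxrank_tr rB minnn.
split; first by rewrite mxrank_tr rA minnn.
move=> C _.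
have := Hg C^T (memvf _); rewrite gE trmxK => /(congr1 trmx); rewrite trmxK => ->.
by rewrite !trmx_mul trmxK mulmxA.
Qed.

End Square.

Theorem theorem4 (F : fieldType) (m n n' : nat) :
  (forall (V : {vspace 'M[F]_(m, n)}) (W : {vspace 'M[F]_(m, n')})
          (f : 'Hom('M[F]_(m, n), 'M[F]_(m, n'))),
      is_rank_support_space V -> is_rank_support_space W ->
      is_iso_on V W f ->
      (P1 V f <-> P2 V f) /\ (P2 V f <-> P3 V f) /\ (P3 V f -> P4 V f)) /\
  (forall f : 'Hom('M[F]_(m, n), 'M[F]_(m, n)),
      is_iso_on fullv fullv f -> m != n ->
      P4 fullv f -> P1 fullv f).
Proof.
split.
  move=> V W f [L hL] _ [hk _].
  case: (posnP m) => [m00|m0].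
    subst m.
    have [h1 h2 h3 h4] := all0 V f; tauto.
  have p13 := P1_P3 m0 hL hk.
  have p32 := P3_P2 m0 hk.
  have p21 := P2_P1 m0 hL hk.
  have p34 : P3 V f -> P4 V f by apply: P3_P4.
  split; first by split => [/p13/p32|/p21].
  split; first by split => [/p21/p13|/p32].
  exact: p34.
move=> f [hk _] mn H4.
case: (ltngtP m n) => [lt|gt|eq].
- exact: sq_lt.
- exact: sq_gt.
- by rewrite eq eqxx in mn.
Qed.
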